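(* Let $d\in\mathbb{N}$ and $x,y\in\mathbb{R}^d$. Then $(x,y)\in\Pi$ if and only if $S_\ell(x,y)<\infty$ for every $\ell\in\mathbb{N}$.
   Context: For $z\in\mathbb{R}^d$, $\|z\|$ denotes the sup-norm distance from $z$ to $\mathbb{Z}^d$. Write $\mathbb{N}=\{1,2,\dots\}$. For $\psi:\mathbb{N}\to\mathbb{R}_{\ge 0}$, let $W(\psi)$ be the set of pairs $(x,y)\in\mathbb{R}^d\times\mathbb{R}^d$ for which $\|nx+y\|<\psi(n)$ holds for infinitely many $n\in\mathbb{N}$. $\mathcal{D}$ is the set of all non-increasing $\psi:\mathbb{N}\to\mathbb{R}_{\ge0}$ with $\sum_n\psi(n)^d=\infty$, and $\Pi=\bigcap_{\psi\in\mathcal{D}}W(\psi)$. For $\ell\in\mathbb{Z}$, $S_\ell(x,y)=\sum_{n\ge \ell}\min_{\ell\le m\le n}\|mx+y\|^d$, where the sum is over integers $n$ and the minimum over integers $m$. *)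

(* Defs.v *)
From HB Require Import structures.
From mathcomp Require Import all_boot all_order all_algebra.
From mathcomp Require Import all_classical all_reals all_analysis.
Set Implicit Arguments. Unset Strict Implicit. Unset Printing Implicit Defensive.
Import Order.TTheory GRing.Theory Num.Theory.
Local Open Scope ring_scope.

Definition distZ {R : realType} (t : R) : R :=
  Num.min (t - (Num.floor t)%:~R) ((Num.floor t + 1)%:~R - t).

Definition normZ {R : realType} {d : nat} (z : 'I_d -> R) : R :=
  \big[Num.max/0]_(i < d) distZ (z i).

Definition lin {R : realType} {d : nat} (n : nat) (x y : 'I_d -> R) : 'I_d -> R :=
  fun i => n%:R * x i + y i.

Definition W {R : realType} {d : nat} (psi : nat -> R) : set (('I_d -> R) * ('I_d -> R)) :=
  [set p | forall N : nat, exists n : nat, (N < n)%N /\ normZ (lin n p.1 p.2) < psi n].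

(* the class D (psi is only relevant on N = {1,2,...}) *)
Definition inD {R : realType} (d : nat) (psi : nat -> R) : Prop :=
  (forall n, (0 < n)%N -> 0 <= psi n) /\
  (forall m n, (0 < m)%N -> (m <= n)%N -> psi n <= psi m) /\
  (\sum_(1 <= n <oo) ((psi n ^+ d)%:E) = +oo)%E.

Definition Pi (R : realType) (d : nat) : set (('I_d -> R) * ('I_d -> R)) :=
  [set p | forall psi : nat -> R, inD d psi -> W psi p].

Definition S {R : realType} {d : nat} (l : nat) (x y : 'I_d -> R) : \bar R :=
  (\sum_(l <= n <oo)
     ((\big[Num.min/(normZ (lin l x y)) ^+ d]_(l <= m < n.+1) (normZ (lin m x y)) ^+ d)%:E))%E.
Arguments Pi R d : clear implicits.

(* Main.v *)
Require Import Defs.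
From HB Require Import structures.
From mathcomp Require Import all_boot all_order all_algebra.
From mathcomp Require Import all_classical all_reals all_analysis.
Import Order.TTheory GRing.Theory Num.Theory.
Local Open Scope ring_scope.

Section H.
Variable R : realType.

Lemma normZ_ge0 d (z : 'I_d -> R) : 0 <= normZ z.
Proof.
rewrite /normZ; elim/big_ind: _ => //= [a b ha hb|i _].
  by rewrite le_max ha.
rewrite /distZ le_min subr_ge0 floor_le /= subr_ge0 intrD.
by apply: ltW; rewrite -intrD floorD1_gt.
Qed.

Lemma min_pow (a b : R) n : 0 <= a -> 0 <= b ->
  (Num.min a b) ^+ n = Num.min (a ^+ n) (b ^+ n).
Proof.
move=> ha hb; case: (leP a b) => hab.
  by rewrite min_l //; apply: lerXn2r; rewrite ?nnegrE.
by rewrite min_r //; apply: lerXn2r; rewrite ?nnegrE // ltW.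
Qed.

Definition phi {d} (l : nat) (x y : 'I_d -> R) (n : nat) :=
  \big[Num.min/normZ (lin l x y)]_(l <= m < n.+1) normZ (lin m x y).

Lemma phi_ge0 d l (x y : 'I_d -> R) n : 0 <= phi l x y n.
Proof.
rewrite /phi; elim/big_ind: _ => //= [|a b ha hb|i _]; try exact: normZ_ge0.
by rewrite le_min ha.
Qed.

Lemma phi_pow d l (x y : 'I_d -> R) n :
  (phi l x y n) ^+ d =
  \big[Num.min/(normZ (lin l x y)) ^+ d]_(l <= m < n.+1) (normZ (lin m x y)) ^+ d.
Proof.
rewrite /phi.
pose K := fun a b : R => 0 <= a /\ a ^+ d = b.
suff: K (\big[Num.min/normZ (lin l x y)]_(l <= m < n.+1) normZ (lin m x y))
  (\big[Num.min/(normZ (lin l x y)) ^+ d]_(l <= m < n.+1) (normZ (lin m x y)) ^+ d).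
  by case.
apply: big_ind2.
- by split=> //; exact: normZ_ge0.
- move=> a1 a2 b1 b2 [h1 e1] [h2 e2]; split; first by rewrite le_min h1.
  by rewrite min_pow // e1 e2.
- by move=> i _; split=> //; exact: normZ_ge0.
Qed.

Lemma bigmin_le_idx (r : seq nat) (F : nat -> R) (a : R) :
  \big[Num.min/a]_(j <- r) F j <= a.
Proof.
elim: r => [|b r ih]; first by rewrite big_nil.
by rewrite big_cons ge_min ih orbT.
Qed.

Lemma bigmin_le_elem (r : seq nat) (F : nat -> R) (a : R) i :
  i \in r -> \big[Num.min/a]_(j <- r) F j <= F i.
Proof.
elim: r => [//|b r ih]; rewrite inE big_cons ge_min => /orP[/eqP ->|/ih ->].
  by rewrite lexx.
by rewrite orbT.
Qed.

Lemma phi_le d l (x y : 'I_d -> R) n : (l <= n)%N -> phi l x y n <= normZ (lin n x y).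
Proof. move=> ln; rewrite /phi. apply: bigmin_le_elem. rewrite mem_index_iota ln ltnS; exact: leqnn. Qed.

Lemma phi_S d l (x y : 'I_d -> R) n : phi l x y n.+1 <= phi l x y n.
Proof.
rewrite [phi l x y n]/phi big_seq; apply: (big_ind (fun v => phi l x y n.+1 <= v)) => [|a b ha hb|i].
- exact: bigmin_le_idx.
- by rewrite le_min ha.
- rewrite mem_index_iota => /andP[h1 h2]; apply: bigmin_le_elem.
  by rewrite mem_index_iota h1 ltnS ltnW.
Qed.

Lemma phi_mono d l (x y : 'I_d -> R) m n : (m <= n)%N -> phi l x y n <= phi l x y m.
Proof.
elim: n => [|n ih]; first by rewrite leqn0 => /eqP ->.
rewrite leq_eqVlt => /orP[/eqP -> //|]; rewrite ltnS => /ih.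
move=> h; apply: le_trans h; exact: phi_S.
Qed.

Lemma lowerb d l (x y : 'I_d -> R) (c : R) n :
  c <= normZ (lin l x y) ^+ d ->
  (forall m, (l <= m <= n)%N -> c <= normZ (lin m x y) ^+ d) ->
  c <= \big[Num.min/(normZ (lin l x y)) ^+ d]_(l <= m < n.+1) (normZ (lin m x y)) ^+ d.
Proof.
move=> h0 hc; rewrite big_seq; apply: (big_ind (fun v => c <= v)) => // [a b ha hb|i].
- by rewrite le_min ha.
- by rewrite mem_index_iota ltnS => /hc.
Qed.
End H.
Arguments phi {R d}.

Theorem lemma4 (R : realType) (d : nat) (hd : (0 < d)%N) (x y : 'I_d -> R) :
  Pi R d (x, y) <-> (forall l : nat, (0 < l)%N -> (S l x y < +oo)%E).
Proof.
split.
- move=> hPi l hl; rewrite ltey; apply/negP => /eqP hS.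
  have hsum : (\sum_(l <= n <oo) (((phi l x y n) ^+ d)%:E) = +oo)%E.
    by rewrite -hS /S; apply/congr_lim/eq_fun => k; apply: eq_bigr => i _; rewrite phi_pow.
  have hD : inD d (phi l x y).
    split; first by move=> n _; exact: phi_ge0.
    split; first by move=> m n _; exact: phi_mono.
    rewrite (@nneseries_split R _ 1 l.-1); last by move=> k _; rewrite lee_fin exprn_ge0 // phi_ge0.
    by rewrite add1n prednK // hsum sumEFin addey.
  have [n [ln hn]] := hPi _ hD l.
  move: hn => /=; rewrite ltNge => /negP; apply; apply: phi_le; exact: ltnW.
- move=> hS psi [h0 [hmono hsum]] N; apply: contrapT => hN.
  have hge : forall n, (N < n)%N -> psi n <= normZ (lin n x y).
    move=> n Nn; rewrite leNgt; apply/negP => hlt; apply: hN; exists n; split => //.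
  have := hS N.+1 (ltn0Sn N); apply/negP; rewrite -leNgt.
  have hpsi0 : forall k, (1 <= k)%N -> (0 <= (psi k ^+ d)%:E)%E.
    by move=> k hk; rewrite lee_fin exprn_ge0 // h0.
  move: hsum; rewrite (@nneseries_split R _ 1 N) // add1n => hsum.
  have htail : (\sum_(N.+1 <= n <oo) ((psi n ^+ d)%:E) <= S N.+1 x y)%E.
    have e1 : forall f : nat -> \bar R,
        (\sum_(N.+1 <= n <oo | (N.+1 <= n)%N) f n = \sum_(N.+1 <= n <oo) f n)%E.
      move=> f; apply/congr_lim/eq_fun => k; rewrite big_nat_cond [in RHS]big_nat_cond.
      by apply: eq_bigl => i; case: (N.+1 <= i)%N.
    rewrite /S -!e1; apply: lee_nneseries.
      by move=> i hi _; apply: hpsi0; apply: leq_trans hi.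
    move=> n hn; rewrite lee_fin; apply: lowerb.
      apply: lerXn2r; rewrite ?nnegrE ?h0 ?normZ_ge0 //; first exact: leq_trans hn.
      apply: le_trans (hge _ (ltnSn N)); apply: hmono => //.
    move=> m /andP[h1 h2]; apply: lerXn2r; rewrite ?nnegrE ?h0 ?normZ_ge0 //; first exact: leq_trans hn.
    apply: le_trans (hge _ h1); apply: hmono => //; exact: leq_trans h1.
  rewrite leNgt; apply/negP => hlt.
  have hf : (\sum_(1 <= k < N.+1) (psi k ^+ d)%:E < +oo)%E by rewrite sumEFin ltry.
  have := lte_add_pinfty hf (le_lt_trans htail hlt).
  by rewrite hsum ltxx.
Qed.
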